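(* Let $\nu>0$, $K>0$ and $d\in\mathbb{N}$, $d\ge2$. Define $\tau_0=\nu$ and $\tau_s=2\tau_{s-1}+3$ for $s\ge1$. There exists $p\in\mathbb{N}$ with the following property. Let $\theta_1,\ldots,\theta_p$ be irrational numbers for which there exists $C>0$ such that for every choice of pairwise distinct indices $i_1,\ldots,i_d\in\{1,\ldots,p\}$ and every $k\in\mathbb{Z}\setminus\{0\}$, $\max_{1\le m\le d}\|k\theta_{i_m}\|\ge C|k|^{-\nu}$. Then for every sufficiently large $U>0$ and every $V$ with $U\le V\le U^K$, there exist $k\in\{1,\ldots,p\}$ and integers $l<n$ such that $l,l+1,\ldots,n-1\in\mathcal{A}_{\tau_{d-1}}(\theta_k)$ and $$q_{k,l}\le U\le V\le q_{k,n}.$$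
   Context: $\|x\|$ is the distance from $x$ to the nearest integer. For an irrational $\alpha$, $(q_n)_{n\ge1}$ denotes the increasing sequence of denominators of the best rational approximations (convergents) of $\alpha$: $q_1=1$ and $\|k\alpha\|>\|q_n\alpha\|$ for all $0<k<q_{n+1}$, $k\ne q_n$. For $\theta_j$ this sequence is written $(q_{j,n})_n$. For $\tau>0$, $\mathcal{A}_\tau(\theta_j)=\{s\in\mathbb{N}: q_{j,s+1}\le q_{j,s}^\tau\}$; a run $l,\ldots,n-1$ of consecutive elements of $\mathcal{A}_\tau(\theta_j)$ is called a Diophantine string of exponent $\tau$. *)

(* Defs.v *)
From Stdlib Require Import Reals Lra Lia.
Open Scope R_scope.

Definition dist_nint (x : R) : R :=
  Rmin (x - IZR (Int_part x)) (IZR (Int_part x) + 1 - x).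

Definition irrational (x : R) : Prop :=
  ~ exists (a b : Z), (b <> 0)%Z /\ x = IZR a / IZR b.

(* q is the sequence (q_n)_{n>=1} of denominators of the best rational
   approximations of alpha, as characterized in the paper:
   q_1 = 1, (q_n) increasing, and ||k alpha|| > ||q_n alpha|| for all
   0 < k < q_{n+1}, k <> q_n.  (q 0 is unused.) *)
Definition best_approx_denoms (alpha : R) (q : nat -> nat) : Prop :=
  q 1%nat = 1%nat /\
  (forall n, (1 <= n)%nat -> (q n < q (S n))%nat) /\
  (forall n k, (1 <= n)%nat -> (0 < k)%nat -> (k < q (S n))%nat -> k <> q n ->
     dist_nint (INR k * alpha) > dist_nint (INR (q n) * alpha)).

Definition in_A (tau : R) (q : nat -> nat) (s : nat) : Prop :=
  (1 <= s)%nat /\ INR (q (S s)) <= Rpower (INR (q s)) tau.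

Fixpoint tau_seq (nu : R) (s : nat) : R :=
  match s with
  | O => nu
  | S s' => 2 * tau_seq nu s' + 3
  end.

(* Main.v *)
Require Import Defs.
From Stdlib Require Import Reals ZArith Lra Lia List Classical IndefiniteDescription.
Open Scope R_scope.

Lemma dist_le (x:R) (z:Z): dist_nint x <= Rabs (x - IZR z).
Proof.
  unfold dist_nint. destruct (base_Int_part x) as [H1 H2].
  set (f := Int_part x) in *.
  destruct (Z.le_gt_cases z f) as [Hz|Hz].
  - apply IZR_le in Hz. apply Rle_trans with (x - IZR f); [apply Rmin_l|].
    rewrite Rabs_right; lra.
  - assert (H: IZR (f+1) <= IZR z) by (apply IZR_le; lia). rewrite plus_IZR in H.
    apply Rle_trans with (IZR f + 1 - x); [apply Rmin_r|].
    rewrite Rabs_left1; lra.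
Qed.

Lemma dist_attained x : exists z, dist_nint x = Rabs (x - IZR z).
Proof.
  unfold dist_nint. destruct (base_Int_part x) as [H1 H2].
  apply Rmin_case.
  - exists (Int_part x). rewrite Rabs_right; lra.
  - exists (Int_part x + 1)%Z. rewrite plus_IZR. rewrite Rabs_left1; lra.
Qed.

Lemma dist_mul (m:nat) x: dist_nint (INR m * x) <= INR m * dist_nint x.
Proof.
  destruct (dist_attained x) as [z Hz]. rewrite Hz.
  eapply Rle_trans; [apply (dist_le _ (Z.of_nat m * z))|].
  rewrite mult_IZR, <- INR_IZR_INZ.
  replace (INR m * x - INR m * IZR z) with (INR m * (x - IZR z)) by ring.
  rewrite Rabs_mult, (Rabs_right (INR m)) by (apply Rle_ge, pos_INR). lra.
Qed.

Definition fr x := x - IZR (Int_part x).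

Lemma fr_bounds x : 0 <= fr x < 1.
Proof. unfold fr. destruct (base_Int_part x). lra. Qed.

Definition box (M:nat) x := Z.to_nat (Int_part (INR M * fr x)).

Lemma box_props M x : (0 < M)%nat ->
  INR (box M x) <= INR M * fr x < INR (box M x) + 1 /\ (box M x < M)%nat.
Proof.
  intros HM. unfold box. pose proof (fr_bounds x).
  assert (Hm: 0 < INR M) by (apply lt_0_INR; lia).
  set (z := INR M * fr x).
  assert (Hz0: 0 <= z) by (unfold z; nra).
  assert (HzM: z < INR M) by (unfold z; nra).
  destruct (base_Int_part z) as [H1 H2].
  assert (HI: (0 <= Int_part z)%Z).
  { apply le_IZR. assert (IZR (Int_part z) > -1) by lra.
    destruct (Z.le_gt_cases 0 (Int_part z)) as [h|h]; [apply IZR_le; auto|].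
    assert (IZR (Int_part z) <= -1) by (apply IZR_le; lia). lra. }
  rewrite INR_IZR_INZ, Z2Nat.id by auto.
  split; [lra|].
  apply Nat2Z.inj_lt. rewrite Z2Nat.id by auto.
  apply lt_IZR. rewrite <- INR_IZR_INZ. lra.
Qed.

Lemma map_not_nodup (f : nat -> nat) l : NoDup l -> ~ NoDup (map f l) ->
  exists x y, In x l /\ In y l /\ x <> y /\ f x = f y.
Proof.
  induction l as [|a l IH]; intros Hl Hn.
  - exfalso; apply Hn; constructor.
  - inversion Hl; subst. simpl in Hn.
    destruct (classic (In (f a) (map f l))) as [Hi|Hi].
    + apply in_map_iff in Hi. destruct Hi as [y [Hy1 Hy2]].
      exists a, y. repeat split; simpl; auto. intro; subst; auto.
    + destruct (classic (NoDup (map f l))) as [Hd|Hd].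
      * exfalso; apply Hn; constructor; auto.
      * destruct (IH H2 Hd) as [x [y [? [? [? ?]]]]]. exists x, y; simpl; auto.
Qed.

Lemma fr_diff_lt M x y : (0 < M)%nat -> box M x = box M y -> Rabs (fr x - fr y) < / INR M.
Proof.
  intros HM Hb. destruct (box_props M x HM) as [[A1 A2] _].
  destruct (box_props M y HM) as [[B1 B2] _]. rewrite Hb in A1, A2.
  assert (Hm: 0 < INR M) by (apply lt_0_INR; lia).
  assert (E: fr x - fr y = (INR M * fr x - INR M * fr y) * / INR M) by (field; lra).
  rewrite E, Rabs_mult, (Rabs_right (/ INR M)) by (apply Rle_ge, Rlt_le, Rinv_0_lt_compat; auto).
  rewrite <- (Rmult_1_l (/ INR M)) at 2.
  apply Rmult_lt_compat_r; [apply Rinv_0_lt_compat; auto|].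
  apply Rabs_def1; lra.
Qed.

Lemma dirichlet th M : (2 <= M)%nat -> exists k, (1 <= k < M)%nat /\ dist_nint (INR k * th) <= / INR M.
Proof.
  intros HM. assert (HM0 : (0 < M)%nat) by lia.
  assert (Hm: 0 < INR M) by (apply lt_0_INR; lia).
  set (g := fun k => box M (INR k * th)).
  destruct (classic (NoDup (map g (seq 0 M)))) as [Hd|Hd].
  - assert (Hincl: incl (seq 0 M) (map g (seq 0 M))).
    { apply NoDup_length_incl; auto. rewrite length_map; lia.
      intros y Hy. apply in_map_iff in Hy. destruct Hy as [k [Hk1 Hk2]].
      apply in_seq. subst y. unfold g. destruct (box_props M (INR k * th) HM0). lia. }
    assert (HIn: In (M-1)%nat (seq 0 M)) by (apply in_seq; lia).
    apply Hincl, in_map_iff in HIn. destruct HIn as [k [Hk1 Hk2]].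
    apply in_seq in Hk2.
    destruct (box_props M (INR k * th) HM0) as [[B1 B2] _]. unfold g in Hk1. rewrite Hk1 in B1, B2.
    rewrite minus_INR in B1 by lia. simpl in B1.
    assert (Hk0: k <> 0%nat).
    { intro; subst k. unfold fr in B1. simpl in B1. rewrite Rmult_0_l in B1.
      destruct (base_Int_part 0) as [C1 C2].
      assert (Int_part 0 = 0%Z).
      { assert (h1: (Int_part 0 <= 0)%Z) by (apply le_IZR; lra).
        assert (h2: (-1 < Int_part 0)%Z) by (apply lt_IZR; lra). lia. }
      rewrite H in B1. simpl in B1. assert (2 <= INR M) by (apply (le_INR 2); auto). nra. }
    exists k. split; [lia|].
    eapply Rle_trans; [apply (dist_le _ (Int_part (INR k * th) + 1))|].
    rewrite plus_IZR. unfold fr in *. set (t := INR k * th) in *.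
    set (I := IZR (Int_part t)) in *.
    pose proof (fr_bounds t). unfold fr in H. fold I in H.
    rewrite Rabs_left1 by lra.
    assert (INR M * (1 - (t - I)) <= 1) by lra.
    apply Rmult_le_reg_l with (INR M); auto. rewrite Rinv_r by lra. lra.
  - destruct (map_not_nodup g _ (seq_NoDup M 0) Hd) as [x [y [Hx [Hy [Hxy Hg]]]]].
    apply in_seq in Hx. apply in_seq in Hy.
    assert (key: forall x y, (x < y < M)%nat -> g x = g y ->
              exists k, (1 <= k < M)%nat /\ dist_nint (INR k * th) <= / INR M).
    { intros a b Hab Hgab. exists (b - a)%nat. split; [lia|].
      eapply Rle_trans; [apply (dist_le _ (Int_part (INR b * th) - Int_part (INR a * th)))|].
      rewrite minus_IZR, minus_INR by lia.
      pose proof (fr_diff_lt M _ _ HM0 Hgab). unfold fr in H.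
      apply Rlt_le.
      replace ((INR b - INR a) * th - (IZR (Int_part (INR b * th)) - IZR (Int_part (INR a * th))))
        with (- (INR a * th - IZR (Int_part (INR a * th)) - (INR b * th - IZR (Int_part (INR b * th))))) by ring.
      rewrite Rabs_Ropp. lra. }
    destruct (Nat.lt_ge_cases x y) as [h|h].
    + apply key with x y; auto; lia.
    + apply key with y x; auto; lia.
Qed.

Lemma q_mono th q : best_approx_denoms th q -> forall a b, (1 <= a <= b)%nat -> (q a <= q b)%nat.
Proof.
  intros [H1 [H2 _]] a b [Ha Hab]. induction Hab; auto.
  specialize (H2 m ltac:(lia)). lia.
Qed.

Lemma q_ge1 th q : best_approx_denoms th q -> forall a, (1 <= a)%nat -> (1 <= q a)%nat.
Proof.
  intros H a Ha. pose proof (q_mono th q H 1 a ltac:(lia)). destruct H as [H1 _]. lia.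
Qed.

Lemma q_ge th q : best_approx_denoms th q -> forall a, (1 <= a)%nat -> (a <= q a)%nat.
Proof.
  intros H a Ha. induction Ha.
  - destruct H as [H1 _]; lia.
  - destruct H as [H1 [H2 _]]. specialize (H2 m ltac:(lia)). lia.
Qed.

Lemma conv_bound th q s : best_approx_denoms th q -> (1 <= s)%nat ->
  dist_nint (INR (q s) * th) <= / INR (q (S s)).
Proof.
  intros H Hs. pose proof (q_ge1 th q H s Hs) as Hq1.
  destruct H as [H1 [H2 H3]].
  pose proof (H2 s Hs).
  destruct (dirichlet th (q (S s)) ltac:(lia)) as [k [Hk Hd]].
  destruct (Nat.eq_dec k (q s)) as [E|E].
  - subst k; auto.
  - specialize (H3 s k Hs ltac:(lia) ltac:(lia) E). lra.
Qed.

Lemma filter_sub_len (f g : nat -> bool) l : (length (filter f (filter g l)) <= length (filter f l))%nat.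
Proof.
  induction l as [|a l IH]; simpl; auto.
  destruct (g a); simpl; destruct (f a); simpl; lia.
Qed.

Lemma pig (cl : nat -> nat) (dm : nat) N : forall l, (forall x, In x l -> (cl x <= N)%nat) ->
  (S N * dm < length l)%nat -> exists c, (dm < length (filter (fun x => Nat.eqb (cl x) c) l))%nat.
Proof.
  induction N as [|N IH]; intros l Hl Hlen.
  - exists 0%nat. rewrite (forallb_filter_id _ l); [lia|].
    apply forallb_forall. intros x Hx. apply Nat.eqb_eq. specialize (Hl x Hx). lia.
  - destruct (Nat.lt_ge_cases dm (length (filter (fun x => Nat.eqb (cl x) (S N)) l))) as [h|h].
    + exists (S N); auto.
    + pose proof (filter_length (fun x => Nat.eqb (cl x) (S N)) l) as E.
      destruct (IH (filter (fun x => negb (Nat.eqb (cl x) (S N))) l)) as [c Hc].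
      * intros x Hx. apply filter_In in Hx. destruct Hx as [Hx1 Hx2].
        apply Bool.negb_true_iff, Nat.eqb_neq in Hx2. specialize (Hl x Hx1). lia.
      * lia.
      * exists c. pose proof (filter_sub_len (fun x => Nat.eqb (cl x) c) (fun x => negb (Nat.eqb (cl x) (S N))) l). lia.
Qed.

Lemma least_ex (P : nat -> Prop) n : P n -> exists m, P m /\ forall k, (k < m)%nat -> ~ P k.
Proof.
  revert P. induction n as [n IH] using lt_wf_ind. intros P Hn.
  destruct (classic (exists k, (k < n)%nat /\ P k)) as [[k [Hk Pk]]|Hno].
  - apply (IH k Hk P Pk).
  - exists n. split; auto. intros k Hk Pk. apply Hno; eauto.
Qed.

Lemma arch_nat (x : R) : exists N : nat, x <= INR N.
Proof.
  destruct (archimed x) as [H1 _].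
  destruct (Z.le_gt_cases 0 (up x)) as [h|h].
  - exists (Z.to_nat (up x)). rewrite INR_IZR_INZ, Z2Nat.id by auto. lra.
  - exists 0%nat. simpl. assert (IZR (up x) <= -1) by (apply IZR_le; lia). lra.
Qed.

Definition prodl (l : list nat) : nat := fold_right Nat.mul 1%nat l.

Lemma prodl_ge1 l : (forall x, In x l -> (1 <= x)%nat) -> (1 <= prodl l)%nat.
Proof.
  induction l as [|a l IH]; simpl; intros H; auto.
  assert (1 <= a)%nat by auto. assert (1 <= prodl l)%nat by auto. nia.
Qed.

Lemma prodl_div l x : In x l -> exists R, prodl l = (x * R)%nat.
Proof.
  induction l as [|a l IH]; simpl; intros H; [contradiction|].
  destruct H as [H|H].
  - subst; eauto.
  - destruct (IH H) as [R HR]. exists (a * R)%nat. rewrite HR. lia.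
Qed.

Lemma ln_le x y : 0 < x -> x <= y -> ln x <= ln y.
Proof.
  intros Hx Hxy. destruct (Rle_lt_or_eq_dec _ _ Hxy) as [h|h].
  - apply Rlt_le, ln_increasing; auto.
  - subst; lra.
Qed.

Lemma ln_nat_ge0 n : (1 <= n)%nat -> 0 <= ln (INR n).
Proof.
  intros H. rewrite <- ln_1. apply ln_le; [lra|]. apply (le_INR 1); auto.
Qed.

Lemma prodl_ln l B : (forall x, In x l -> (1 <= x)%nat /\ ln (INR x) <= B) ->
  ln (INR (prodl l)) <= INR (length l) * B.
Proof.
  induction l as [|a l IH]; simpl; intros H.
  - rewrite ln_1; lra.
  - destruct (H a (or_introl eq_refl)) as [Ha1 Ha2].
    assert (Hl: forall x, In x l -> (1 <= x)%nat /\ ln (INR x) <= B) by auto.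
    specialize (IH Hl). pose proof (prodl_ge1 l (fun x h => proj1 (Hl x h))).
    rewrite mult_INR, ln_mult.
    + change (match length l with 0%nat => 1 | S _ => INR (length l) + 1 end) with (INR (S (length l))). rewrite S_INR. lra.
    + apply lt_0_INR; lia.
    + apply lt_0_INR; lia.
Qed.

Lemma tau_bound nu s : 0 < nu -> tau_seq nu s >= INR (S s) * (nu + 1) + INR s - 1.
Proof.
  intros Hnu. induction s as [|s IH].
  - change (tau_seq nu 0) with nu. change (INR 1) with 1. change (INR 0) with 0. lra.
  - change (tau_seq nu (S s)) with (2 * tau_seq nu s + 3).
    rewrite (S_INR (S s)). rewrite (S_INR s) in *. pose proof (pos_INR s). nra.
Qed.

Lemma bad_index th q tau U V : best_approx_denoms th q -> 1 <= U -> U <= V ->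
 (forall l n, (1<=l)%nat -> (l<n)%nat -> (forall s, (l<=s<n)%nat -> in_A tau q s) ->
    INR (q l) <= U -> V <= INR (q n) -> False) ->
 exists s, (1<=s)%nat /\ INR (q s) <= V /\ U < INR (q (S s)) /\ Rpower (INR (q s)) tau < INR (q (S s)).
Proof.
  intros Hq HU HUV Hf.
  destruct (arch_nat V) as [N HN].
  assert (HqN: forall n, (S N <= n)%nat -> V < INR (q n)).
  { intros n Hn. pose proof (q_ge th q Hq n ltac:(lia)).
    apply le_INR in H. apply le_INR in Hn. rewrite S_INR in Hn. lra. }
  assert (Ex1: (1 <= S N)%nat /\ U < INR (q (S N))) by (split; [lia| pose proof (HqN (S N) (le_n _)); lra]).
  destruct (least_ex (fun m => (1<=m)%nat /\ U < INR (q m)) _ Ex1) as [m [[Hm1 Hm2] Hmin]].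
  assert (Hm1': m <> 1%nat).
  { intro; subst m. destruct Hq as [H1 _]. rewrite H1 in Hm2. simpl in Hm2. lra. }
  set (l := pred m).
  assert (Hl: INR (q l) <= U).
  { apply Rnot_lt_le. intro h. apply (Hmin l); [unfold l; lia|]. split; auto. unfold l; lia. }
  assert (Ex2: (l < S (max l N))%nat /\ V <= INR (q (S (max l N)))).
  { split; [lia|]. apply Rlt_le, HqN. lia. }
  destruct (least_ex (fun n => (l<n)%nat /\ V <= INR (q n)) _ Ex2) as [n [[Hn1 Hn2] Hnmin]].
  destruct (classic (forall s, (l<=s<n)%nat -> in_A tau q s)) as [Hall|Hn].
  { exfalso. apply (Hf l n); auto. unfold l; lia. }
  apply not_all_ex_not in Hn. destruct Hn as [s Hs]. apply imply_to_and in Hs. destruct Hs as [Hs1 Hs2].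
  assert (Hs: (1 <= s)%nat) by (unfold l in Hs1; lia).
  exists s. split; [auto|]. split; [|split].
  - destruct (Nat.eq_dec s l) as [E|E].
    + subst s. lra.
    + apply Rlt_le, Rnot_le_lt. intro h. apply (Hnmin s); [lia|]. split; auto. lia.
  - pose proof (q_mono th q Hq m (S s) ltac:(unfold l in Hs1; lia)). apply le_INR in H. lra.
  - apply Rnot_le_lt. intro h. apply Hs2. split; auto.
Qed.

Lemma final_ineq (C nu tau D dR u w c La LR Lb : R):
 0 < nu -> D = dR*(1+nu) -> 0 < D -> tau >= D -> w = u * / (2*D*(2*D+1)) -> 0 < u ->
 D * w >= Rabs (ln C) -> 0 <= c -> 0 <= La -> 0 <= LR ->
 La + LR <= dR * ((c+1) * w) -> c * w <= La -> Lb > u -> Lb > tau * La ->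
 (1+nu)*(La+LR) < ln C + La + Lb.
Proof.
  intros Hnu HD HD0 Htau Hw Hu HC Hc HLa HLR HQ HcLa Hbu Hbt.
  set (l := ln C) in *.
  assert (Hl: - l <= Rabs l) by (rewrite <- Rabs_Ropp; apply Rle_abs).
  assert (Hw0: 0 < w) by (rewrite Hw; apply Rmult_lt_0_compat; auto; apply Rinv_0_lt_compat; nra).
  assert (H1: (1+nu)*(La+LR) <= D * (c+1) * w).
  { rewrite HD. replace (dR * (1 + nu) * (c + 1) * w) with ((1+nu) * (dR * ((c+1)*w))) by ring.
    apply Rmult_le_compat_l; lra. }
  destruct (Rle_lt_dec (2*D) c) as [h|h].
  - assert (tau * La >= D * La) by (apply Rle_ge, Rmult_le_compat_r; lra).
    assert (D * La >= D * (c * w)) by (apply Rle_ge, Rmult_le_compat_l; lra).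
    assert (c * w >= 2 * D * w) by (apply Rle_ge, Rmult_le_compat_r; lra).
    assert (D * (c+1) * w = D * (c * w) + D * w) by ring.
    lra.
  - assert (D * (c+1) * w <= D * (2*D+1) * w).
    { apply Rmult_le_compat_r; [lra|]. apply Rmult_le_compat_l; lra. }
    assert (E: D * (2*D+1) * w = u / 2) by (rewrite Hw; field; lra).
    assert (D * w <= u / 2).
    { rewrite Hw. replace (D * (u * / (2 * D * (2 * D + 1)))) with (u / 2 * / (2*D+1)) by (field; lra).
      assert (/ (2*D+1) <= 1). { rewrite <- Rinv_1. apply Rinv_le_contravar; lra. }
      assert (0 < / (2*D+1)) by (apply Rinv_0_lt_compat; lra). nra. }
    lra.
Qed.

Lemma class_props y w : 0 < w -> 0 <= y ->
  INR (Z.to_nat (Int_part (y / w))) * w <= y < (INR (Z.to_nat (Int_part (y / w))) + 1) * w.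
Proof.
  intros Hw Hy. set (z := y / w).
  assert (Hz: 0 <= z) by (unfold z; apply Rmult_le_pos; [auto|apply Rlt_le, Rinv_0_lt_compat; auto]).
  destruct (base_Int_part z) as [H1 H2].
  assert (HI: (0 <= Int_part z)%Z).
  { destruct (Z.le_gt_cases 0 (Int_part z)) as [h|h]; auto.
    assert (IZR (Int_part z) <= -1) by (apply IZR_le; lia). lra. }
  rewrite INR_IZR_INZ, Z2Nat.id by auto.
  assert (Ey: y = z * w) by (unfold z; field; lra).
  rewrite Ey. split; nra.
Qed.

Theorem mainTheorem4 (nu K : R) (d : nat) :
  0 < nu -> 0 < K -> (2 <= d)%nat ->
  exists p : nat,
    forall (theta : nat -> R),
      (forall j, (1 <= j <= p)%nat -> irrational (theta j)) ->
      (exists C : R, 0 < C /\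
         forall (i : nat -> nat) (k : Z),
           (forall m, (m < d)%nat -> (1 <= i m <= p)%nat) ->
           (forall m m', (m < d)%nat -> (m' < d)%nat -> i m = i m' -> m = m') ->
           k <> 0%Z ->
           exists m, (m < d)%nat /\
             dist_nint (IZR k * theta (i m)) >= C * Rpower (Rabs (IZR k)) (- nu)) ->
      forall q : nat -> nat -> nat,
        (forall j, (1 <= j <= p)%nat -> best_approx_denoms (theta j) (q j)) ->
        exists U0 : R, forall U V : R,
          0 < U -> U0 <= U -> U <= V -> V <= Rpower U K ->
          exists (k l n : nat),
            (1 <= k <= p)%nat /\ (1 <= l)%nat /\ (l < n)%nat /\
            (forall s, (l <= s < n)%nat -> in_A (tau_seq nu (d - 1)) (q k) s) /\
            INR (q k l) <= U /\ U <= V /\ V <= INR (q k n).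
Proof.
  intros Hnu HK Hd.
  set (D := INR d * (1 + nu)).
  assert (HdR: 2 <= INR d) by (apply (le_INR 2); auto).
  assert (HD0: 0 < D) by (unfold D; nra).
  set (del := / (2*D*(2*D+1))).
  assert (Hdel: 0 < del) by (unfold del; apply Rinv_0_lt_compat; nra).
  destruct (arch_nat (K / del)) as [N HN].
  exists (S N * (d - 1) + 1)%nat. set (p := (S N * (d - 1) + 1)%nat).
  intros theta _ [C [HC Hdio]] q Hq.
  exists (exp (Rabs (ln C) / (D*del)) + 1).
  intros U V HU HU0 HUV HVK.
  set (tau := tau_seq nu (d-1)).
  destruct (classic (exists (k l n : nat),
            (1 <= k <= p)%nat /\ (1 <= l)%nat /\ (l < n)%nat /\
            (forall s, (l <= s < n)%nat -> in_A tau (q k) s) /\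
            INR (q k l) <= U /\ U <= V /\ V <= INR (q k n))) as [H|H]; [exact H|].
  exfalso.
  assert (HU1: 1 < U) by (pose proof (exp_pos (Rabs (ln C) / (D * del))); lra).
  set (u := ln U).
  assert (Hu: Rabs (ln C) / (D*del) < u).
  { unfold u. rewrite <- (ln_exp (Rabs (ln C) / (D * del))). apply ln_increasing; [apply exp_pos|lra]. }
  assert (Hu0: 0 < u).
  { assert (0 <= Rabs (ln C) / (D*del)) by (apply Rmult_le_pos; [apply Rabs_pos|apply Rlt_le, Rinv_0_lt_compat; nra]). lra. }
  set (w := u * del).
  assert (Hw0: 0 < w) by (unfold w; nra).
  assert (HDw: D * w >= Rabs (ln C)).
  { unfold w. replace (D * (u * del)) with (u * (D*del)) by ring.
    apply Rle_ge. apply Rmult_lt_compat_r with (r := D*del) in Hu; [|nra].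
    replace (Rabs (ln C) / (D * del) * (D * del)) with (Rabs (ln C)) in Hu by (field; nra). lra. }
  assert (Hex: forall j, exists s, (1 <= j <= p)%nat ->
     (1<=s)%nat /\ INR (q j s) <= V /\ U < INR (q j (S s)) /\ Rpower (INR (q j s)) tau < INR (q j (S s))).
  { intros j. destruct (classic (1 <= j <= p)%nat) as [Hj|Hj].
    - destruct (bad_index (theta j) (q j) tau U V (Hq j Hj) ltac:(lra) HUV) as [s Hs].
      + intros l n Hl Hln Hall Hl2 Hn2. apply H. exists j, l, n. split; [lia|]; split; [lia|]; split; [lia|]; split; [exact Hall|]; auto.
      + exists s; auto.
    - exists 0%nat; intro; contradiction. }
  set (sf := fun j => proj1_sig (constructive_indefinite_description _ (Hex j))).
  assert (Hsf: forall j, (1 <= j <= p)%nat ->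
     (1<=sf j)%nat /\ INR (q j (sf j)) <= V /\ U < INR (q j (S (sf j))) /\ Rpower (INR (q j (sf j))) tau < INR (q j (S (sf j)))).
  { intros j Hj. unfold sf. destruct (constructive_indefinite_description _ (Hex j)) as [s Hs]. simpl. auto. }
  set (a := fun j => q j (sf j)).
  assert (Ha1: forall j, (1 <= j <= p)%nat -> (1 <= a j)%nat).
  { intros j Hj. unfold a. apply (q_ge1 (theta j) (q j) (Hq j Hj)). apply Hsf; auto. }
  set (cl := fun j => Z.to_nat (Int_part (ln (INR (a j)) / w))).
  assert (Hcl: forall j, (1 <= j <= p)%nat ->
     INR (cl j) * w <= ln (INR (a j)) < (INR (cl j) + 1) * w /\ (cl j <= N)%nat).
  { intros j Hj. pose proof (ln_nat_ge0 _ (Ha1 j Hj)).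
    pose proof (class_props (ln (INR (a j))) w Hw0 H0) as [C1 C2]. fold (cl j) in C1, C2.
    split; [auto|]. apply INR_le.
    assert (Hy: ln (INR (a j)) <= K * u).
    { destruct (Hsf j Hj) as [_ [HV _]].
      apply Rle_trans with (ln V).
      - apply ln_le; auto. apply lt_0_INR. pose proof (Ha1 j Hj); lia.
      - apply Rle_trans with (ln (Rpower U K)).
        + apply ln_le; lra.
        + unfold Rpower. rewrite ln_exp. unfold u; lra. }
    assert (Hcw: INR (cl j) * w <= K * u) by lra.
    assert (Kw: K * u = (K / del) * w) by (unfold w; field; lra).
    rewrite Kw in Hcw. apply Rmult_le_reg_r in Hcw; auto. lra. }
  destruct (pig cl (d-1) N (seq 1 p)) as [c Hc].
  { intros x Hx. apply in_seq in Hx. apply Hcl. lia. }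
  { rewrite length_seq. unfold p. lia. }
  set (F := filter (fun x => Nat.eqb (cl x) c) (seq 1 p)) in *.
  assert (HF: forall x, In x F -> (1 <= x <= p)%nat /\ cl x = c).
  { intros x Hx. unfold F in Hx. apply filter_In in Hx. destruct Hx as [Hx1 Hx2].
    apply in_seq in Hx1. apply Nat.eqb_eq in Hx2. split; [lia|auto]. }
  assert (HFnd: NoDup F) by (apply NoDup_filter, seq_NoDup).
  set (i := fun m => nth m F 0%nat).
  assert (Hi: forall m, (m < d)%nat -> (1 <= i m <= p)%nat /\ cl (i m) = c).
  { intros m Hm. apply HF. apply nth_In. lia. }
  set (Q := prodl (map (fun m => a (i m)) (seq 0 d))).
  assert (HQ1: (1 <= Q)%nat).
  { apply prodl_ge1. intros x Hx. apply in_map_iff in Hx. destruct Hx as [m [Hm1 Hm2]].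
    apply in_seq in Hm2. subst x. apply Ha1, Hi. lia. }
  destruct (Hdio i (Z.of_nat Q)) as [m [Hm Hdm]].
  { intros m Hm. apply Hi; auto. }
  { intros m m' Hm Hm' E. apply (proj1 (NoDup_nth F 0%nat) HFnd); auto; lia. }
  { lia. }
  rewrite <- INR_IZR_INZ in Hdm. rewrite Rabs_right in Hdm by (apply Rle_ge, pos_INR).
  set (j := i m) in *.
  destruct (Hi m Hm) as [Hj Hjc].
  destruct (Hsf j Hj) as [Hs1 [HsV [HsU HsT]]].
  fold (a j) in HsV, HsT.
  set (b := q j (S (sf j))) in *.
  destruct (prodl_div (map (fun m => a (i m)) (seq 0 d)) (a j)) as [R HR].
  { apply in_map_iff. exists m. split; auto. apply in_seq. lia. }
  fold Q in HR.
  assert (Haj: (1 <= a j)%nat) by (apply Ha1; auto).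
  assert (HR1: (1 <= R)%nat) by nia.
  assert (Hb0: 0 < INR b) by lra.
  assert (Hdist: dist_nint (INR Q * theta j) <= INR R * / INR b).
  { rewrite HR, mult_INR. replace (INR (a j) * INR R * theta j) with (INR R * (INR (a j) * theta j)) by ring.
    eapply Rle_trans; [apply dist_mul|]. apply Rmult_le_compat_l; [apply pos_INR|].
    exact (conv_bound (theta j) (q j) (sf j) (Hq j Hj) Hs1). }
  assert (Ha0: 0 < INR (a j)) by (apply lt_0_INR; lia).
  assert (HR0: 0 < INR R) by (apply lt_0_INR; lia).
  assert (HLQ: ln (INR Q) = ln (INR (a j)) + ln (INR R)) by (rewrite HR, mult_INR, ln_mult; auto).
  assert (HQbound: ln (INR Q) <= INR d * ((INR c + 1) * w)).
  { unfold Q. replace (INR d) with (INR (length (map (fun m => a (i m)) (seq 0 d)))) by (rewrite length_map, length_seq; auto).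
    apply prodl_ln. intros x Hx. apply in_map_iff in Hx. destruct Hx as [m' [Hm1 Hm2]].
    apply in_seq in Hm2. subst x. destruct (Hi m' ltac:(lia)) as [Hj' Hc'].
    split; [apply Ha1; auto|]. destruct (Hcl _ Hj') as [[_ B] _]. rewrite Hc' in B. lra. }
  assert (Htau: tau >= D).
  { unfold tau, D. pose proof (tau_bound nu (d-1) Hnu).
    replace (S (d-1)) with d in H0 by lia. rewrite minus_INR in H0 by lia. simpl in H0. lra. }
  assert (HLb1: ln (INR b) > u) by (apply ln_increasing; lra).
  assert (HLb2: ln (INR b) > tau * ln (INR (a j))).
  { replace (tau * ln (INR (a j))) with (ln (Rpower (INR (a j)) tau)) by (unfold Rpower; rewrite ln_exp; auto).
    apply ln_increasing; auto. unfold Rpower; apply exp_pos. }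
  destruct (Hcl j Hj) as [[Hc1 _] _]. fold j in Hjc. rewrite Hjc in Hc1.
  pose proof (final_ineq C nu tau D (INR d) u w (INR c) (ln (INR (a j))) (ln (INR R)) (ln (INR b))
     Hnu eq_refl HD0 Htau eq_refl Hu0 HDw (pos_INR c) (ln_nat_ge0 _ Haj) (ln_nat_ge0 _ HR1)
     ltac:(rewrite <- HLQ; exact HQbound) Hc1 HLb1 HLb2) as Hfin.
  assert (Hlt: INR R * / INR b < C * Rpower (INR Q) (- nu)).
  { unfold Rpower. rewrite <- (exp_ln C) by auto. rewrite <- (exp_ln (INR R)) by auto.
    rewrite <- (exp_ln (INR b)) at 1 by auto. rewrite <- exp_Ropp, <- !exp_plus.
    apply exp_increasing. rewrite HLQ. nra. }
  lra.
Qed.
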